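(* For integers $1\le N\le 50$, a $PCS_6^N$ exists if and only if $N=1$ or $N$ is even.
   Context: A binary sequence of length $N$ is a sequence $a=(a(0),\dots,a(N-1))$ with each $a(i)\in\{+1,-1\}$. Its periodic autocorrelation function is $\tilde\varphi_a(i)=\sum_{j=0}^{N-1}a(j)a(i+j \bmod N)$ for $0\le i<N$. A family $a_1,\dots,a_p$ of binary sequences, all of length $N$, is a $PCS_p^N$ (periodic complementary set) if $\sum_{k=1}^p\tilde\varphi_{a_k}(i)=0$ for all $0<i<N$. The sequences in a family need not be distinct. *)

(* Defs.v *)
From HB Require Import structures.
From mathcomp Require Import all_boot all_order all_algebra.
Unset Strict Implicit. Unset Printing Implicit Defensive.
Import Order.TTheory GRing.Theory Num.Theory.
Local Open Scope ring_scope.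

(* A binary sequence of length N is represented by a : nat -> int, of which
   only the entries a 0, ..., a (N-1) are relevant; they must be +1 or -1. *)
Definition binary_seq (N : nat) (a : nat -> int) : Prop :=
  forall j : nat, (j < N)%N -> a j = 1 \/ a j = -1.

Definition pacf (N : nat) (a : nat -> int) (i : nat) : int :=
  \sum_(j < N) a j * a ((i + j) %% N)%N.

Definition is_PCS (p N : nat) (a : 'I_p -> nat -> int) : Prop :=
  (forall k : 'I_p, binary_seq N (a k)) /\
  (forall i : nat, (0 < i)%N -> (i < N)%N -> \sum_(k < p) pacf N (a k) i = 0).

Definition PCS_exists (p N : nat) : Prop := exists a : 'I_p -> nat -> int, @is_PCS p N a.

(* Main.v *)
Require Import Defs.
From mathcomp Require Import all_boot all_order all_algebra.
From Stdlib Require Import Lia.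
Set Implicit Arguments. Unset Strict Implicit. Unset Printing Implicit Defensive.
Import Order.TTheory GRing.Theory Num.Theory.
Local Open Scope ring_scope.

Definition cc (x y : int) : nat := (x == -1) && (y == 1).

Lemma shift_sum (N i : nat) (F : nat -> int) : (0 < N)%N ->
  \sum_(j < N) F ((i + j) %% N)%N = \sum_(j < N) F j.
Proof.
move=> N0.
pose f (j : 'I_N) : 'I_N := Ordinal (ltn_pmod (i + j) N0).
have finj : injective f.
  move=> j1 j2 /(congr1 val) /= /eqP; rewrite eqn_modDl !modn_small ?ltn_ord //.
  by move/eqP/val_inj.
by rewrite [RHS](reindex_inj finj).
Qed.

Lemma pacf_mod4 (N : nat) (a : nat -> int) (i : nat) : (0 < N)%N -> binary_seq N a ->
  pacf N a i = N%:Z - 4 * (\sum_(j < N) (cc (a j) (a ((i + j) %% N)%N)))%:Z.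
Proof.
move=> N0 ha.
have key : forall j : 'I_N, 1 - a j * a ((i + j) %% N)%N =
   4 * (cc (a j) (a ((i + j) %% N)%N))%:Z + a j - a ((i + j) %% N)%N.
  move=> j.
  have hj := ha j (ltn_ord j).
  have hb := ha _ (ltn_pmod (i + j) N0).
  by case: hj => ->; case: hb => ->.
have e1 : \sum_(j < N) (1 - a j * a ((i + j) %% N)%N) = N%:Z - pacf N a i.
  by rewrite sumrB sumr_const card_ord natz.
have e2 : \sum_(j < N) (4 * (cc (a j) (a ((i + j) %% N)%N))%:Z + a j - a ((i + j) %% N)%N)
   = 4 * (\sum_(j < N) (cc (a j) (a ((i + j) %% N)%N)))%:Z.
  rewrite sumrB big_split /= shift_sum // addrK -mulr_sumr.
  congr (_ * _). rewrite -natz natr_sum; apply: eq_bigr => j _; by rewrite natz.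
rewrite -(eq_bigr _ (fun j _ => key j)) in e2.
rewrite e1 in e2.
by rewrite -e2 opprB addrC subrK.
Qed.

Lemma no_odd N : (1 < N)%N -> odd N -> ~ PCS_exists 6 N.
Proof.
move=> N1 oN [a [hb hs]].
have := hs 1%N isT N1.
rewrite (eq_bigr _ (fun k _ => @pacf_mod4 N (a k) 1%N (ltnW N1) (hb k))).
rewrite sumrB sumr_const card_ord -mulr_sumr.
set S := \sum_(k < 6) _.
have -> : S = (\sum_(k < 6) \sum_(j < N) cc (a k j) (a k ((1 + j) %% N)%N))%N%:Z.
  by rewrite /S -natz natr_sum; apply: eq_bigr => j _; rewrite natz.
move/eqP; rewrite subr_eq0 => /eqP.
set T := (\sum_(k < 6) _)%N.
rewrite -[Posz N]natz -[Posz T]natz -mulrnA -natrM => /eqP; rewrite eqr_nat => /eqP.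
rewrite -(odd_double_half N) oN -addnn.
move: (N./2) => m. rewrite -!plusE -!multE => E. simpl in E. lia.
Qed.

Notation P := true.
Notation M := false.

Definition mkn (w : seq (seq bool)) (k j : nat) : int :=
  if nth false (nth [::] w k) j then 1 else -1.

Definition fsum (s : seq nat) (F : nat -> int) : int := foldr (fun j acc => F j + acc) 0 s.

Lemma fsumE N (F : nat -> int) : \sum_(j < N) F j = fsum (iota 0 N) F.
Proof.
rewrite -(big_mkord xpredT) /index_iota subn0.
by elim: (iota 0 N) => [|x s IH]; rewrite ?big_nil ?big_cons //= IH.
Qed.

Definition pacfc N (a : nat -> int) i := fsum (iota 0 N) (fun j => a j * a ((i + j) %% N)%N).

Definition check N w :=
  all (fun i => fsum (iota 0 6) (fun k => pacfc N (mkn w k) i) == 0) (iota 1 N.-1).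

Lemma check_ok N w : check N w -> PCS_exists 6 N.
Proof.
move=> /allP h.
exists (fun k => mkn w k); split.
  by move=> k j _; rewrite /mkn; case: ifP => _; [left|right].
move=> i i0 iN.
have := h i; rewrite mem_iota i0 add1n prednK ?(leq_trans i0 (ltnW iN)) // => /(_ iN) /eqP E.
rewrite (fsumE 6 (fun k => pacf N (mkn w k) i)) -[RHS]E.
rewrite /fsum; elim: (iota 0 6) => //= k s ->; congr (_ + _).
by rewrite /pacf (fsumE N (fun j => mkn w k j * mkn w k ((i + j) %% N)%N)).
Qed.
Definition wit (N : nat) : seq (seq bool) :=
  match N with
  | 1 => [:: [:: P]; [:: P]; [:: P]; [:: P]; [:: P]; [:: P]]
  | 2 => [::
    [:: P; M];
    [:: P; P];
    [:: P; P];
    [:: P; M];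
    [:: P; M];
    [:: M; M]]
  | 4 => [::
    [:: P; M; P; P];
    [:: P; P; M; P];
    [:: P; M; M; M];
    [:: P; P; P; M];
    [:: M; P; M; M];
    [:: M; M; M; P]]
  | 6 => [::
    [:: P; M; P; P; P; P];
    [:: M; P; M; M; M; P];
    [:: P; M; P; M; M; P];
    [:: M; M; M; M; M; P];
    [:: M; M; P; M; P; P];
    [:: M; M; P; P; P; M]]
  | 8 => [::
    [:: P; M; P; M; P; P; M; P];
    [:: P; M; M; M; P; M; P; M];
    [:: M; M; M; M; M; M; M; P];
    [:: M; M; P; P; P; P; M; M];
    [:: M; P; P; M; M; M; P; P];
    [:: P; P; M; M; P; P; M; P]]
  | 10 => [::
    [:: P; P; P; M; P; M; M; M; M; M];
    [:: P; P; P; M; P; M; M; P; M; M];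
    [:: M; M; M; P; M; M; M; M; P; M];
    [:: M; M; M; P; P; M; M; M; M; P];
    [:: P; P; M; P; P; P; M; M; P; M];
    [:: M; M; M; P; M; P; P; P; M; P]]
  | 12 => [::
    [:: P; P; M; P; P; M; M; M; P; P; M; M];
    [:: P; M; P; M; M; M; P; M; M; M; M; P];
    [:: M; M; P; M; P; M; M; M; M; P; M; M];
    [:: M; P; P; P; P; P; P; M; M; P; M; P];
    [:: P; P; M; M; M; M; M; P; P; P; P; M];
    [:: M; M; P; M; P; M; M; M; P; M; P; P]]
  | 14 => [::
    [:: P; M; P; M; P; P; P; P; P; P; P; P; P; M];
    [:: M; M; M; P; P; P; M; P; P; P; P; M; M; M];
    [:: P; P; M; M; P; P; P; M; M; M; P; P; P; P];
    [:: P; M; P; P; M; P; M; M; P; P; M; P; M; M];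
    [:: P; M; M; P; M; P; M; P; M; P; P; M; M; P];
    [:: M; M; M; P; M; M; P; P; M; M; P; M; P; P]]
  | 16 => [::
    [:: M; M; P; P; P; P; P; P; P; M; M; M; M; P; P; P];
    [:: M; M; P; M; M; M; P; P; P; M; P; M; P; M; M; P];
    [:: P; P; M; M; M; M; P; P; P; M; P; P; M; P; P; M];
    [:: P; M; P; M; M; P; M; M; M; M; P; M; P; M; P; P];
    [:: P; M; M; M; M; M; M; P; M; P; M; P; M; M; M; M];
    [:: M; M; P; P; P; M; M; P; P; P; M; P; P; M; M; P]]
  | 18 => [::
    [:: M; P; P; P; P; P; P; P; M; P; M; P; P; P; P; P; M; P];
    [:: P; P; M; P; M; P; P; M; P; M; M; M; P; M; P; M; P; P];
    [:: M; M; P; P; M; M; M; P; M; M; M; P; P; P; P; M; P; P];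
    [:: M; P; P; M; P; P; P; P; P; M; M; M; M; M; M; P; P; M];
    [:: M; M; P; P; M; M; M; P; P; M; P; M; M; P; P; P; M; P];
    [:: M; P; P; P; M; P; M; M; P; P; M; P; M; M; P; M; M; M]]
  | 20 => [::
    [:: P; P; M; P; M; P; P; M; P; M; P; M; M; P; P; M; P; P; M; M];
    [:: M; P; M; M; P; M; M; M; P; M; P; M; P; P; P; M; M; M; M; M];
    [:: M; M; P; P; M; M; P; M; P; P; M; M; M; P; P; M; M; M; M; M];
    [:: M; M; M; M; P; P; P; P; M; M; P; P; P; P; P; P; P; P; M; P];
    [:: P; P; P; M; P; M; M; M; P; M; P; M; M; M; M; M; P; P; M; P];
    [:: P; M; M; P; M; M; P; P; P; M; M; M; P; P; M; M; P; M; P; M]]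
  | 22 => [::
    [:: P; M; P; P; P; M; M; P; M; M; P; P; P; M; P; P; P; P; M; M; M; P];
    [:: M; P; P; P; P; M; P; M; M; M; M; P; M; P; M; M; M; M; M; P; P; P];
    [:: M; P; M; P; P; M; P; M; M; P; P; P; P; P; M; M; M; M; M; P; M; M];
    [:: M; P; M; M; M; M; M; P; P; M; M; M; P; P; M; M; M; P; M; M; M; M];
    [:: M; P; M; P; M; P; P; P; M; P; M; M; P; M; P; P; M; M; P; M; M; M];
    [:: P; M; P; M; P; P; P; M; P; M; M; M; P; P; M; M; P; M; M; P; M; M]]
  | 24 => [::
    [:: M; P; M; P; P; M; M; M; P; M; P; P; P; M; P; P; P; M; M; P; M; P; M; M];
    [:: P; M; P; M; P; P; M; P; P; M; M; P; P; M; P; M; M; M; M; M; P; P; M; M];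
    [:: P; M; P; M; M; P; P; P; M; M; P; P; M; M; M; M; M; M; M; P; M; P; M; M];
    [:: P; P; P; M; M; M; M; P; P; M; P; M; M; M; P; P; P; M; P; M; P; P; M; M];
    [:: P; P; P; P; P; M; P; M; M; P; M; P; P; P; M; M; M; M; P; M; M; P; P; M];
    [:: P; P; P; P; M; P; M; M; M; M; M; M; M; P; M; M; M; P; M; M; M; M; M; M]]
  | 26 => [::
    [:: P; P; P; M; P; M; P; M; M; M; M; M; P; M; P; P; M; M; M; P; M; P; P; P; P; M];
    [:: P; P; M; M; M; M; P; P; M; M; P; P; M; M; P; M; M; M; P; M; M; P; M; M; P; M];
    [:: P; M; M; P; M; P; P; P; P; M; P; M; P; M; M; P; M; P; M; M; P; P; P; M; M; P];
    [:: M; P; M; P; P; P; M; M; P; M; M; M; M; M; P; M; P; M; P; M; M; M; M; M; P; M];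
    [:: M; P; P; P; M; M; P; P; P; P; M; M; P; M; M; M; M; M; M; P; P; P; M; M; M; M];
    [:: P; M; M; M; M; M; M; M; M; P; P; M; P; M; M; P; P; M; P; P; P; M; M; M; P; M]]
  | 28 => [::
    [:: M; M; M; P; P; M; M; M; P; P; P; M; P; P; P; M; P; P; M; P; M; M; M; P; M; M; P; P];
    [:: P; M; P; P; M; P; M; P; P; M; P; M; M; P; P; P; P; P; P; M; M; M; P; M; P; P; P; M];
    [:: P; P; P; M; P; P; P; M; P; P; P; M; P; M; M; M; P; M; M; M; M; P; P; P; P; P; P; P];
    [:: M; M; P; P; P; P; M; P; P; M; P; M; P; M; M; P; P; P; P; P; M; M; M; P; P; M; M; P];
    [:: M; M; M; P; P; P; M; M; M; M; M; M; M; P; P; P; M; P; M; P; P; M; M; P; M; P; P; M];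
    [:: M; P; P; M; M; P; M; M; M; M; M; P; P; M; P; M; P; M; P; M; M; P; M; P; M; M; P; M]]
  | 30 => [::
    [:: M; M; P; M; P; M; P; P; P; M; P; P; M; M; M; M; P; P; P; P; M; P; P; P; M; M; P; M; M; M];
    [:: M; P; P; M; M; P; P; P; M; P; P; P; M; M; M; P; M; P; M; M; M; M; M; M; P; P; M; P; P; P];
    [:: P; M; P; P; M; M; P; P; P; P; M; M; P; P; P; P; P; M; P; P; M; P; P; P; P; M; P; P; M; P];
    [:: M; P; M; M; M; M; P; M; P; P; P; M; P; M; M; M; P; M; P; P; M; M; P; M; P; M; M; P; M; P];
    [:: M; P; M; P; P; P; P; P; P; P; M; P; P; M; M; M; M; M; P; M; P; P; M; M; M; P; P; M; P; P];
    [:: M; P; P; M; M; M; P; P; P; M; M; M; M; P; M; P; P; M; M; M; P; M; M; M; P; P; P; P; M; P]]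
  | 32 => [::
    [:: M; M; M; M; P; P; P; M; P; M; P; M; P; P; P; P; P; P; M; M; M; P; M; M; M; P; P; M; P; M; P; P];
    [:: M; P; M; P; P; M; P; P; P; P; P; P; P; M; P; M; P; M; M; P; M; M; M; P; M; M; P; P; P; P; P; M];
    [:: P; P; P; M; M; P; M; M; M; M; M; P; P; M; P; M; P; M; M; M; P; P; P; M; M; P; P; M; P; P; M; P];
    [:: P; M; P; P; M; M; M; P; M; P; M; M; P; P; P; P; P; P; M; P; P; M; P; P; M; M; P; P; P; M; M; M];
    [:: P; M; M; M; M; P; M; P; M; P; M; M; M; M; P; P; M; P; P; P; M; M; P; P; M; P; M; M; M; M; M; P];
    [:: P; P; M; P; M; M; M; M; M; M; M; P; M; P; P; M; M; M; P; M; M; P; P; M; M; M; M; P; M; P; M; M]]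
  | 34 => [::
    [:: M; M; P; M; M; M; P; M; P; P; M; P; M; M; P; P; P; M; P; M; P; M; P; P; P; P; P; M; M; P; P; P; M; M];
    [:: M; P; P; P; M; P; P; M; P; P; P; M; P; P; P; P; P; P; P; M; M; M; P; M; M; P; P; P; M; M; M; P; M; P];
    [:: P; P; M; P; P; M; P; P; M; P; M; P; M; M; P; P; M; P; P; P; P; M; P; P; P; P; M; M; M; M; M; M; M; P];
    [:: M; P; M; P; M; P; P; P; M; P; P; P; M; P; P; M; P; M; M; P; M; M; P; P; M; M; M; M; P; P; P; M; P; P];
    [:: M; P; P; P; P; P; M; P; M; M; M; P; M; M; M; P; M; M; P; M; M; P; M; P; P; M; P; P; M; M; P; P; M; M];
    [:: P; P; P; P; M; M; P; M; P; P; P; P; M; P; P; P; P; M; M; M; P; P; M; P; M; P; P; P; P; M; M; M; P; P]]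
  | 36 => [::
    [:: M; P; P; P; P; M; P; P; P; M; P; P; P; P; P; M; M; P; P; M; M; M; P; M; P; P; P; M; P; P; P; M; M; P; P; P];
    [:: M; M; P; M; P; P; P; M; P; P; P; M; P; M; P; P; M; M; P; P; M; P; P; P; P; M; P; P; P; M; P; P; M; M; P; M];
    [:: M; M; M; P; P; P; P; M; M; P; M; P; M; P; P; P; M; P; M; M; M; M; P; M; P; M; P; M; P; M; M; P; P; P; P; M];
    [:: M; P; M; M; P; M; P; P; M; M; M; M; M; M; P; M; M; M; M; P; M; P; P; P; P; P; P; P; P; P; M; M; P; M; P; P];
    [:: M; M; M; P; P; P; P; P; M; M; M; P; M; M; P; M; P; P; M; P; P; M; M; P; M; M; P; M; P; P; P; M; M; M; P; M];
    [:: M; P; M; M; P; M; P; M; M; P; M; M; M; P; P; P; P; M; M; M; P; P; M; M; M; P; P; P; P; M; P; P; M; P; P; P]]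
  | 38 => [::
    [:: M; M; M; P; M; P; M; M; M; P; P; M; P; M; P; M; P; P; M; M; M; P; P; P; M; M; M; M; M; M; P; P; P; P; M; M; P; P];
    [:: M; M; M; P; P; M; P; M; M; P; M; M; M; M; M; M; M; M; M; M; P; M; P; P; M; M; P; P; M; M; P; M; P; M; P; M; M; M];
    [:: P; P; M; M; P; M; P; P; M; P; M; M; M; M; M; M; P; P; M; P; P; M; P; M; M; P; M; P; M; P; P; P; P; P; M; M; P; P];
    [:: M; M; M; P; M; M; M; P; M; P; M; P; P; P; P; M; M; M; M; M; M; P; M; M; P; P; P; M; P; M; P; P; M; P; P; M; P; P];
    [:: M; M; M; M; P; P; M; M; M; P; P; M; P; P; P; P; M; P; P; M; P; P; M; P; P; M; M; P; M; M; M; P; M; P; M; P; M; M];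
    [:: P; M; P; P; P; M; M; M; P; M; M; M; P; M; M; M; P; P; P; M; M; M; P; P; M; P; M; M; M; P; P; P; P; M; P; M; M; P]]
  | 40 => [::
    [:: P; M; P; P; M; M; P; M; M; P; P; M; P; M; M; M; P; P; M; M; P; P; M; M; M; P; P; P; P; P; M; M; P; M; P; M; M; M; M; M];
    [:: P; P; P; M; M; P; P; P; M; M; P; P; P; P; M; P; P; M; M; P; P; M; M; P; M; M; P; M; P; M; M; P; P; P; P; P; M; P; M; P];
    [:: M; M; M; M; P; M; P; M; M; P; M; P; P; P; M; P; P; M; P; M; M; P; M; P; M; P; P; P; P; P; M; P; M; P; M; P; M; M; M; P];
    [:: M; P; M; P; P; P; P; P; M; M; M; M; P; M; M; M; P; P; P; P; M; M; M; M; M; M; P; M; P; M; M; M; M; M; M; M; M; P; M; M];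
    [:: P; P; P; M; P; M; M; P; P; M; M; M; M; P; M; P; P; P; M; M; P; M; M; M; M; P; M; P; M; M; M; M; P; P; P; M; M; P; P; M];
    [:: P; M; P; P; P; P; M; M; P; P; M; P; M; M; M; M; P; M; M; P; P; P; M; P; M; M; M; M; M; P; M; P; P; M; P; P; M; M; P; P]]
  | 42 => [::
    [:: P; P; M; P; M; P; M; P; M; M; P; M; M; M; M; M; M; P; P; M; M; P; M; M; M; P; M; P; M; M; P; M; M; P; P; P; P; P; M; M; P; P];
    [:: P; P; P; M; M; M; M; P; P; P; M; P; M; M; M; P; M; M; P; M; M; P; M; P; M; P; M; M; P; P; P; M; P; M; M; M; P; P; M; P; M; M];
    [:: P; M; P; P; P; M; M; M; P; M; M; P; M; P; P; M; P; M; M; P; M; M; P; P; M; M; M; P; M; P; M; P; P; P; M; P; M; M; M; M; M; M];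
    [:: M; P; M; M; P; P; P; M; M; P; M; M; P; M; P; P; P; P; M; M; P; P; P; M; P; P; P; M; M; M; M; M; M; M; M; M; M; P; P; P; M; P];
    [:: M; P; P; M; M; M; M; P; P; P; P; M; M; M; M; P; M; M; M; M; M; P; M; M; M; P; M; M; M; M; M; M; P; M; P; P; M; P; M; P; P; M];
    [:: P; P; P; P; P; P; P; M; P; M; M; M; P; M; M; M; P; P; P; M; M; P; P; M; P; P; M; P; P; M; P; M; P; P; M; M; P; P; M; M; M; P]]
  | 44 => [::
    [:: P; M; M; P; P; P; P; P; P; P; M; M; M; P; P; M; M; M; M; M; P; M; P; P; P; M; M; P; P; M; P; M; P; M; P; M; M; M; M; P; M; P; P; P];
    [:: P; P; M; M; P; M; P; M; P; M; M; P; M; M; P; P; M; P; M; P; P; P; P; M; P; P; M; M; P; P; P; P; P; P; P; P; M; P; M; M; M; M; P; M];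
    [:: M; M; P; P; M; M; P; M; P; M; M; M; P; M; M; P; M; P; P; M; P; M; P; M; P; P; P; P; M; M; M; M; M; M; M; P; M; M; P; M; M; M; M; M];
    [:: M; P; P; M; M; P; P; P; P; P; M; P; P; P; M; M; M; M; P; P; P; P; P; P; P; M; P; M; M; P; M; P; M; P; M; M; M; P; P; P; M; P; M; P];
    [:: M; P; P; M; M; P; P; M; M; P; P; P; P; P; P; M; M; P; P; M; M; M; M; M; P; P; M; P; P; M; P; M; M; P; M; M; P; M; M; P; M; M; M; M];
    [:: M; M; P; P; M; M; P; P; M; M; P; M; P; M; P; P; M; M; P; P; M; P; M; P; P; M; M; M; P; P; P; P; M; M; M; P; P; P; M; M; M; P; M; P]]
  | 46 => [::
    [:: M; M; M; M; P; M; P; M; P; P; M; P; P; M; M; P; P; M; P; M; P; P; M; P; M; P; M; P; M; M; M; M; M; P; M; P; P; P; P; P; M; M; M; M; M; P];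
    [:: M; M; P; P; M; P; P; M; M; P; M; P; P; M; P; M; P; P; M; M; M; P; M; P; P; P; P; P; P; M; P; P; P; M; M; M; M; M; M; M; P; P; M; P; P; M];
    [:: M; P; M; M; P; M; M; P; M; M; M; P; P; M; P; M; M; P; M; P; P; P; M; M; P; P; M; P; P; P; M; M; P; M; M; P; P; M; P; P; P; M; M; M; P; P];
    [:: M; P; M; P; P; P; P; P; P; M; P; P; P; M; P; P; P; P; M; P; P; P; M; M; M; P; P; P; P; M; P; P; M; M; P; P; P; M; P; P; P; P; M; M; M; P];
    [:: P; M; M; P; P; P; P; M; P; P; P; P; M; P; M; M; P; P; M; P; M; P; M; P; M; M; M; P; M; M; M; M; P; P; P; M; M; P; M; M; M; M; P; P; P; M];
    [:: P; P; M; M; P; P; P; P; P; M; P; M; P; P; P; M; M; M; M; M; M; M; M; M; P; P; M; M; P; M; P; P; M; M; P; M; P; P; P; M; M; M; P; M; P; P]]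
  | 48 => [::
    [:: M; P; P; M; M; P; P; M; P; P; M; P; M; M; M; P; P; P; M; M; P; M; P; P; P; P; M; M; P; P; P; M; P; M; M; M; M; M; P; M; M; P; P; P; M; M; M; M];
    [:: M; M; P; P; M; M; P; P; P; M; M; M; M; P; M; M; P; M; M; P; P; P; P; M; P; M; M; P; P; M; P; P; P; P; M; P; M; P; P; P; M; M; P; M; M; P; M; P];
    [:: P; P; M; P; P; P; M; M; M; M; P; M; P; M; P; P; M; P; M; M; P; P; P; M; M; M; M; M; M; P; M; P; M; P; M; M; M; P; P; M; M; P; P; P; M; M; M; M];
    [:: P; M; M; M; P; M; M; P; M; P; P; P; P; P; P; M; M; M; M; P; P; M; P; P; M; P; M; P; M; M; M; M; M; M; M; P; M; M; P; P; M; M; P; M; M; P; M; P];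
    [:: P; P; P; P; P; P; P; P; P; M; M; P; P; M; M; M; M; M; P; M; M; M; P; M; P; M; P; P; M; M; M; M; M; M; M; P; P; M; M; M; M; M; P; M; P; M; M; M];
    [:: P; M; P; M; P; M; P; M; P; P; M; M; P; P; M; P; M; P; P; P; M; P; P; P; P; P; P; M; M; P; M; P; M; P; M; M; P; P; M; P; M; P; P; P; P; P; M; P]]
  | 50 => [::
    [:: P; M; M; P; M; M; P; P; P; P; M; M; M; M; P; M; P; M; M; P; P; P; M; P; P; M; M; P; M; P; M; M; M; P; M; P; P; P; P; P; M; P; M; P; P; M; P; M; M; M];
    [:: M; M; M; P; M; P; P; P; M; M; M; M; M; M; P; M; M; M; M; P; M; M; P; M; M; M; M; P; P; P; M; P; P; M; M; M; M; P; P; M; M; P; M; P; M; P; P; P; M; M];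
    [:: P; P; M; P; P; M; M; M; M; P; P; M; P; M; M; P; M; P; M; P; M; P; M; P; M; M; M; P; P; P; P; P; P; M; P; P; P; P; M; P; P; P; M; P; P; M; P; P; M; P];
    [:: P; P; P; P; M; P; M; P; M; P; M; P; P; P; P; M; P; P; M; P; M; M; M; P; M; M; P; M; M; P; P; P; M; M; M; M; M; M; M; M; P; P; P; P; P; M; P; M; P; M];
    [:: M; P; P; M; M; M; P; P; M; M; M; P; P; M; P; P; M; M; P; P; P; P; M; M; P; M; M; M; M; P; P; M; M; M; M; M; P; P; M; M; P; P; M; M; P; P; M; M; M; P];
    [:: P; P; P; M; P; P; M; P; M; M; P; M; P; M; M; M; M; M; P; P; M; P; P; P; M; P; P; P; P; P; P; M; M; P; M; P; P; M; M; M; P; P; M; M; M; M; P; P; M; P]]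
  | _ => [::]
  end.

Lemma all_checks : all (fun N => ((N == 1) || ~~ odd N) ==> check N (wit N)) (iota 1 50).
Proof. vm_compute. reflexivity. Qed.

Theorem proposition5 (N : nat) (hN1 : (1 <= N)%N) (hN2 : (N <= 50)%N) :
  PCS_exists 6 N <-> (N = 1%N \/ ~~ odd N).
Proof.
split.
  move=> H; case: (boolP (odd N)) => oN; last by right.
  have [N1|HN] := ltnP 1 N; first by case: (no_odd N1 oN H).
  by left; apply/eqP; rewrite eqn_leq HN hN1.
move=> H; apply: (@check_ok N (wit N)).
have := allP all_checks N; rewrite mem_iota hN1 add1n ltnS hN2 => /(_ isT) /implyP; apply.
by case: H => [->|->] //; rewrite orbT.
Qed.
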